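(* For all $1\le i<j\le\ell$, $X_iX_j=q^{-1}X_jX_i$.
   Context: $0<q<1$, $\ell\ge1$. In $U_q(\mathfrak{su}(\ell+1))$ (generators $K_i^{\pm1},E_i,F_i=E_i^*$, $1\le i\le\ell$, standard Drinfeld–Jimbo relations $K_iE_iK_i^{-1}=qE_i$, $K_iE_jK_i^{-1}=q^{-1/2}E_j$ for $|i-j|=1$, $=E_j$ for $|i-j|>1$, $[E_i,F_j]=\delta_{ij}\frac{K_i^2-K_i^{-2}}{q-q^{-1}}$, quantum Serre relations), enlarged by $\hat K=(K_1K_2^2\cdots K_\ell^\ell)^{2/(\ell+1)}$, set $[a,b]_q=ab-q^{-1}ba$, $M_{ii}=E_i$, $M_{jk}=[E_j,M_{j+1,k}]_q$ ($j<k$), $N_{i\ell}=(K_iK_{i+1}\cdots K_\ell)\hat K^{-1}$ and $X_i:=N_{i\ell}M_{i\ell}^*$. *)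

(* Defs.v *)
From HB Require Import structures.
From mathcomp Require Import all_boot all_order all_algebra.
Set Implicit Arguments. Unset Strict Implicit. Unset Printing Implicit Defensive.
Import Order.TTheory GRing.Theory Num.Theory.
Local Open Scope ring_scope.

Section UqDefs.
Variables (R : rcfType) (A : unitAlgType R).

Definition qcomm (q : R) (a b : A) : A := a * b - q^-1 *: (b * a).

(* Mup E q n j = M_{j, j+n}, built by  M_{jj} = E_j, M_{jk} = [E_j, M_{j+1,k}]_q *)
Fixpoint Mup (E : nat -> A) (q : R) (n j : nat) : A :=
  match n with
  | 0 => E j
  | n'.+1 => qcomm q (E j) (Mup E q n' j.+1)
  end.

Definition Mjk (E : nat -> A) (q : R) (j k : nat) : A := Mup E q (k - j) j.

Definition Nil (K : nat -> A) (Khat : A) (i l : nat) : A :=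
  (\prod_(i <= m < l.+1) K m) * Khat^-1.

Definition Xi (star : A -> A) (K E : nat -> A) (Khat : A) (q : R) (l i : nat) : A :=
  Nil K Khat i l * star (Mjk E q i l).

Definition Kcoef (q : R) (i j : nat) : R :=
  if i == j then q
  else if (i == j.+1) || (j == i.+1) then (Num.sqrt q)^-1
  else 1.

(* star is an involutive, R-linear, anti-multiplicative map
   (U_q over C, restricted to real scalars, is such an algebra) *)
Definition is_star (star : A -> A) : Prop :=
  [/\ forall a b, star (a + b) = star a + star b,
      forall (c : R) a, star (c *: a) = c *: star a,
      forall a b, star (a * b) = star b * star a,
      star 1 = 1 &
      forall a, star (star a) = a].

Definition Uq_su_relations (q : R) (l : nat) (star : A -> A)
    (K E : nat -> A) (Khat : A) : Prop :=
  let F := fun i => star (E i) in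
  [/\ is_star star,
   [/\
      forall i, (1 <= i <= l)%N -> K i \is a GRing.unit /\ star (K i) = K i,
      forall i j, (1 <= i <= l)%N -> (1 <= j <= l)%N -> K i * K j = K j * K i &
      (* K_i E_j K_i^{-1} = q^{a_ij/2} E_j *)
      forall i j, (1 <= i <= l)%N -> (1 <= j <= l)%N ->
        K i * E j * (K i)^-1 = Kcoef q i j *: E j],
   [/\
      forall i j, (1 <= i <= l)%N -> (1 <= j <= l)%N ->
        E i * F j - F j * E i =
          (if i == j then (q - q^-1)^-1 *: (K i ^+ 2 - (K i)^-1 ^+ 2) else 0),
      forall i j, (1 <= i <= l)%N -> (1 <= j <= l)%N ->
        ((i == j.+1) || (j == i.+1)) ->
        E i ^+ 2 * E j - (q + q^-1) *: (E i * E j * E i) + E j * E i ^+ 2 = 0 &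
      forall i j, (1 <= i <= l)%N -> (1 <= j <= l)%N ->
        (i != j) -> ~~ ((i == j.+1) || (j == i.+1)) -> E i * E j = E j * E i] &
      (* \hat K = (K_1 K_2^2 ... K_l^l)^{2/(l+1)}: invertible, self-adjoint,
         commuting with the K_i, (l+1)-th power equal to (K_1 K_2^2...K_l^l)^2,
         and hence \hat K E_j \hat K^{-1} = q^{delta_{jl}} E_j *)
      [/\ Khat \is a GRing.unit, star Khat = Khat,
          forall i, (1 <= i <= l)%N -> Khat * K i = K i * Khat,
          Khat ^+ l.+1 = (\prod_(1 <= m < l.+1) K m ^+ m) ^+ 2 &
          forall j, (1 <= j <= l)%N ->
            Khat * E j * Khat^-1 = (if j == l then q else 1) *: E j]].

End UqDefs.

(* Main.v *)
Require Import Defs.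
From HB Require Import structures.
From mathcomp Require Import all_boot all_order all_algebra.
From mathcomp Require Import ring lra zify.
Set Implicit Arguments. Unset Strict Implicit. Unset Printing Implicit Defensive.
Import Order.TTheory GRing.Theory Num.Theory.
Local Open Scope ring_scope.

Inductive term := TV of nat | TAdd of term & term | TSub of term & term
 | TOpp of term | TMul of term & term | TQ of term | TQi of term.

Definition mono := (seq nat * int * int)%type.
Definition mneg (m : mono) : mono := (m.1, - m.2).
Definition mshift (d : int) (m : mono) : mono := (m.1.1, m.1.2 + d, m.2).
Definition mmul (m1 m2 : mono) : mono := (m1.1.1 ++ m2.1.1, m1.1.2 + m2.1.2, m1.2 * m2.2).

Fixpoint norm t : seq mono := match t with
 | TV n => [:: ([:: n], 0, 1)]
 | TAdd t u => norm t ++ norm u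
 | TSub t u => norm t ++ map mneg (norm u)
 | TOpp t => map mneg (norm t)
 | TMul t u => [seq mmul m1 m2 | m1 <- norm t, m2 <- norm u]
 | TQ t => map (mshift 1) (norm t)
 | TQi t => map (mshift (-1)) (norm t) end.

Fixpoint ins (m : mono) (s : seq mono) := match s with
 | [::] => [:: m]
 | m' :: s' => if m'.1 == m.1 then (m'.1, m'.2 + m.2) :: s' else m' :: ins m s' end.
Definition collect s := foldr ins [::] s.
Definition check s := all (fun m : mono => m.2 == 0) (collect s).

Section Refl.
Variables (R : fieldType) (A : algType R) (q : R).
Hypothesis q0 : q != 0.
Variable vs : seq A.

Fixpoint ev t := match t with
 | TV n => nth 0 vs n
 | TAdd t u => ev t + ev u
 | TSub t u => ev t - ev u
 | TOpp t => - ev t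
 | TMul t u => ev t * ev u
 | TQ t => q *: ev t
 | TQi t => q^-1 *: ev t end.

Definition evw (w : seq nat) : A := \prod_(i <- w) nth 0 vs i.
Definition evm (m : mono) : A := (m.2%:~R * q ^ m.1.2) *: evw m.1.1.
Definition evl (s : seq mono) : A := \sum_(m <- s) evm m.

Lemma evl_cat s1 s2 : evl (s1 ++ s2) = evl s1 + evl s2.
Proof. by rewrite /evl big_cat. Qed.

Lemma evl_neg s : evl (map mneg s) = - evl s.
Proof.
rewrite /evl big_map -sumrN; apply: eq_bigr => m _.
by rewrite /evm /mneg /= intrN mulNr scaleNr.
Qed.

Lemma evl_shift d s : evl (map (mshift d) s) = q ^ d *: evl s.
Proof.
rewrite /evl big_map scaler_sumr; apply: eq_bigr => m _.
rewrite /evm /mshift /= scalerA expfzDr //; congr (_ *: _); ring.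
Qed.

Lemma evm_mul m1 m2 : evm (mmul m1 m2) = evm m1 * evm m2.
Proof.
rewrite /evm /mmul /= /evw big_cat /= -scalerAl -scalerAr scalerA.
rewrite intrM expfzDr //; congr (_ *: _); ring.
Qed.

Lemma evl_mul s1 s2 : evl [seq mmul m1 m2 | m1 <- s1, m2 <- s2] = evl s1 * evl s2.
Proof.
rewrite /evl big_allpairs_dep mulr_suml; apply: eq_bigr => m1 _.
by rewrite mulr_sumr; apply: eq_bigr => m2 _; rewrite evm_mul.
Qed.

Lemma norm_ok t : ev t = evl (norm t).
Proof.
elim: t => [n|t IHt u IHu|t IHt u IHu|t IHt|t IHt u IHu|t IHt|t IHt] /=.
- by rewrite /evl big_seq1 /evm /evw big_seq1 /= expr0z mulr1 scale1r.
- by rewrite evl_cat IHt IHu.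
- by rewrite evl_cat evl_neg IHt IHu.
- by rewrite evl_neg IHt.
- by rewrite evl_mul IHt IHu.
- by rewrite evl_shift expr1z IHt.
- by rewrite evl_shift exprN1 IHt.
Qed.

Lemma evl_ins m s : evl (ins m s) = evm m + evl s.
Proof.
elim: s => [|m' s IH] /=; first by rewrite /evl big_seq1 big_nil addr0.
case: eqP => [E|_].
  rewrite /evl !big_cons /evm /= -E intrD mulrDl scalerDl.
  by rewrite addrA [X in X + _ = _]addrC.
by rewrite /evl !big_cons -/(evl _) IH /evl addrCA.
Qed.

Lemma evl_collect s : evl (collect s) = evl s.
Proof.
elim: s => [|m s IH] //=.
by rewrite evl_ins IH /evl big_cons.
Qed.

Lemma check_ok s : check s -> evl s = 0.
Proof.
rewrite /check -evl_collect => /allP H.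
rewrite /evl big1_seq // => m /andP[_ /H /eqP Hm].
by rewrite /evm Hm mul0r scale0r.
Qed.

Lemma refl_eq t u : check (norm (TSub t u)) -> ev t = ev u.
Proof.
move=> /check_ok; rewrite -norm_ok /= => /eqP; rewrite subr_eq0 => /eqP.
done.
Qed.
End Refl.
Definition adj_lhs := (TAdd (TSub (TMul (TSub (TMul (TV 1) (TV 2)) (TQi (TMul (TV 2) (TV 1)))) (TSub (TMul (TV 0) (TSub (TMul (TV 1) (TV 2)) (TQi (TMul (TV 2) (TV 1))))) (TQi (TMul (TSub (TMul (TV 1) (TV 2)) (TQi (TMul (TV 2) (TV 1)))) (TV 0))))) (TQi (TMul (TSub (TMul (TV 0) (TSub (TMul (TV 1) (TV 2)) (TQi (TMul (TV 2) (TV 1))))) (TQi (TMul (TSub (TMul (TV 1) (TV 2)) (TQi (TMul (TV 2) (TV 1)))) (TV 0)))) (TSub (TMul (TV 1) (TV 2)) (TQi (TMul (TV 2) (TV 1))))))) (TQ (TQ (TSub (TMul (TSub (TMul (TV 1) (TV 2)) (TQi (TMul (TV 2) (TV 1)))) (TSub (TMul (TV 0) (TSub (TMul (TV 1) (TV 2)) (TQi (TMul (TV 2) (TV 1))))) (TQi (TMul (TSub (TMul (TV 1) (TV 2)) (TQi (TMul (TV 2) (TV 1)))) (TV 0))))) (TQi (TMul (TSub (TMul (TV 0) (TSub (TMul (TV 1) (TV 2)) (TQi (TMul (TV 2) (TV 1))))) (TQi (TMul (TSub (TMul (TV 1) (TV 2)) (TQi (TMul (TV 2) (TV 1)))) (TV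 0)))) (TSub (TMul (TV 1) (TV 2)) (TQi (TMul (TV 2) (TV 1)))))))))).
Definition adj_rhs := (TAdd (TAdd (TAdd (TAdd (TAdd (TAdd (TAdd (TAdd (TAdd (TAdd (TAdd (TAdd (TAdd (TAdd (TAdd (TAdd (TAdd (TAdd (TAdd (TAdd (TAdd (TAdd (TAdd (TAdd (TAdd (TAdd (TAdd (TAdd (TAdd (TOpp (TQi (TQi (TMul (TSub (TMul (TV 0) (TV 2)) (TMul (TV 2) (TV 0))) (TMul (TMul (TV 2) (TV 1)) (TV 1)))))) (TOpp (TQi (TQi (TMul (TMul (TV 2) (TSub (TMul (TV 0) (TV 2)) (TMul (TV 2) (TV 0)))) (TMul (TV 1) (TV 1))))))) (TQi (TQi (TQi (TQi (TMul (TMul (TMul (TV 2) (TV 1)) (TSub (TMul (TV 0) (TV 2)) (TMul (TV 2) (TV 0)))) (TV 1))))))) (TAdd (TQi (TQi (TMul (TMul (TMul (TV 2) (TV 1)) (TSub (TMul (TV 0) (TV 2)) (TMul (TV 2) (TV 0)))) (TV 1)))) (TQi (TQi (TMul (TMul (TMul (TV 2) (TV 1)) (TSub (TMul (TV 0) (TV 2)) (TMul (TV 2) (TV 0)))) (TV 1)))))) (TMul (TMul (TMul (TV 2) (TV 1)) (TSub (TMul (TV 0) (TV 2)) (TMul (TV 2) (TV 0)))) (TV 1))) (TOpp (TQi (TQi (TMul (TMul (TMul (TV 2) (TV 1)) (TV 1)) (TSub (TMul (TV 0) (TV 2)) (TMul (TV 2) (TV 0)))))))) (TOpp (TMul (TMul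 (TMul (TV 2) (TV 1)) (TV 1)) (TSub (TMul (TV 0) (TV 2)) (TMul (TV 2) (TV 0)))))) (TQi (TMul (TMul (TV 1) (TSub (TMul (TV 0) (TV 2)) (TMul (TV 2) (TV 0)))) (TMul (TV 2) (TV 1))))) (TQ (TMul (TMul (TV 1) (TSub (TMul (TV 0) (TV 2)) (TMul (TV 2) (TV 0)))) (TMul (TV 2) (TV 1))))) (TOpp (TQi (TQi (TQi (TMul (TMul (TMul (TV 1) (TV 2)) (TSub (TMul (TV 0) (TV 2)) (TMul (TV 2) (TV 0)))) (TV 1))))))) (TOpp (TQi (TMul (TMul (TMul (TV 1) (TV 2)) (TSub (TMul (TV 0) (TV 2)) (TMul (TV 2) (TV 0)))) (TV 1))))) (TQi (TQi (TMul (TSub (TMul (TV 0) (TV 2)) (TMul (TV 2) (TV 0))) (TMul (TMul (TV 1) (TV 1)) (TV 2)))))) (TMul (TSub (TMul (TV 0) (TV 2)) (TMul (TV 2) (TV 0))) (TMul (TMul (TV 1) (TV 1)) (TV 2)))) (TOpp (TQi (TQi (TMul (TMul (TV 1) (TSub (TMul (TV 0) (TV 2)) (TMul (TV 2) (TV 0)))) (TMul (TV 1) (TV 2))))))) (TOpp (TAdd (TMul (TMul (TV 1) (TSub (TMul (TV 0) (TV 2)) (TMul (TV 2) (TV 0)))) (TMul (TV 1) (TV 2))) (TMul (TMul (TV 1) (TSub (TMul (TV 0) (TV 2)) (TMul (TV 2) (TV 0)))) (TMul (TV 1) (TV 2)))))) (TOpp (TQ (TQ (TMul (TMul (TV 1)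 (TSub (TMul (TV 0) (TV 2)) (TMul (TV 2) (TV 0)))) (TMul (TV 1) (TV 2))))))) (TMul (TMul (TMul (TV 1) (TV 1)) (TSub (TMul (TV 0) (TV 2)) (TMul (TV 2) (TV 0)))) (TV 2))) (TMul (TMul (TMul (TV 1) (TV 1)) (TV 2)) (TSub (TMul (TV 0) (TV 2)) (TMul (TV 2) (TV 0))))) (TQ (TMul (TSub (TMul (TV 1) (TSub (TMul (TV 0) (TV 1)) (TQi (TMul (TV 1) (TV 0))))) (TQi (TMul (TSub (TMul (TV 0) (TV 1)) (TQi (TMul (TV 1) (TV 0)))) (TV 1)))) (TMul (TV 2) (TV 2))))) (TOpp (TQi (TMul (TMul (TV 2) (TSub (TMul (TV 1) (TSub (TMul (TV 0) (TV 1)) (TQi (TMul (TV 1) (TV 0))))) (TQi (TMul (TSub (TMul (TV 0) (TV 1)) (TQi (TMul (TV 1) (TV 0)))) (TV 1))))) (TV 2))))) (TOpp (TQ (TMul (TMul (TV 2) (TSub (TMul (TV 1) (TSub (TMul (TV 0) (TV 1)) (TQi (TMul (TV 1) (TV 0))))) (TQi (TMul (TSub (TMul (TV 0) (TV 1)) (TQi (TMul (TV 1) (TV 0)))) (TV 1))))) (TV 2))))) (TQi (TMul (TMul (TV 2) (TV 2)) (TSub (TMul (TV 1) (TSub (TMul (TV 0) (TV 1)) (TQi (TMul (TV 1) (TV 0))))) (TQi (TMul (TSub (TMul (TV 0) (TV 1)) (TQi (TMul (TV 1) (TV 0)))) (TV 1))))))) (TQi (TQi (TMul (TSub (TMul (TV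 2) (TSub (TMul (TV 1) (TV 2)) (TQi (TMul (TV 2) (TV 1))))) (TQi (TMul (TSub (TMul (TV 1) (TV 2)) (TQi (TMul (TV 2) (TV 1)))) (TV 2)))) (TMul (TV 0) (TV 1)))))) (TMul (TSub (TMul (TV 2) (TSub (TMul (TV 1) (TV 2)) (TQi (TMul (TV 2) (TV 1))))) (TQi (TMul (TSub (TMul (TV 1) (TV 2)) (TQi (TMul (TV 2) (TV 1)))) (TV 2)))) (TMul (TV 0) (TV 1)))) (TOpp (TQi (TMul (TMul (TV 0) (TSub (TMul (TV 2) (TSub (TMul (TV 1) (TV 2)) (TQi (TMul (TV 2) (TV 1))))) (TQi (TMul (TSub (TMul (TV 1) (TV 2)) (TQi (TMul (TV 2) (TV 1)))) (TV 2))))) (TV 1))))) (TOpp (TQ (TMul (TMul (TV 0) (TV 1)) (TSub (TMul (TV 2) (TSub (TMul (TV 1) (TV 2)) (TQi (TMul (TV 2) (TV 1))))) (TQi (TMul (TSub (TMul (TV 1) (TV 2)) (TQi (TMul (TV 2) (TV 1)))) (TV 2)))))))) (TOpp (TQi (TMul (TSub (TMul (TV 2) (TSub (TMul (TV 1) (TV 2)) (TQi (TMul (TV 2) (TV 1))))) (TQi (TMul (TSub (TMul (TV 1) (TV 2)) (TQi (TMul (TV 2) (TV 1)))) (TV 2)))) (TMul (TV 1) (TV 0)))))) (TOpp (TQ (TMul (TMul (TV 1) (TSub (TMul (TV 2) (TSub (TMul (TV 1) (TV 2)) (TQi (TMul (TV 2) (TV 1))))) (TQi (TMul (TSub (TMul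 (TV 1) (TV 2)) (TQi (TMul (TV 2) (TV 1)))) (TV 2))))) (TV 0))))) (TMul (TMul (TV 1) (TV 0)) (TSub (TMul (TV 2) (TSub (TMul (TV 1) (TV 2)) (TQi (TMul (TV 2) (TV 1))))) (TQi (TMul (TSub (TMul (TV 1) (TV 2)) (TQi (TMul (TV 2) (TV 1)))) (TV 2)))))) (TQ (TQ (TMul (TMul (TV 1) (TV 0)) (TSub (TMul (TV 2) (TSub (TMul (TV 1) (TV 2)) (TQi (TMul (TV 2) (TV 1))))) (TQi (TMul (TSub (TMul (TV 1) (TV 2)) (TQi (TMul (TV 2) (TV 1)))) (TV 2)))))))).

Definition na_lhs := (TMul (TSub (TMul (TV 0) (TV 1)) (TQi (TMul (TV 1) (TV 0)))) (TV 2)).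
Definition na_rhs := (TAdd (TQ (TMul (TV 2) (TSub (TMul (TV 0) (TV 1)) (TQi (TMul (TV 1) (TV 0)))))) (TAdd (TAdd (TAdd (TQ (TMul (TSub (TMul (TV 0) (TV 2)) (TMul (TV 2) (TV 0))) (TV 1))) (TOpp (TQi (TMul (TV 1) (TSub (TMul (TV 0) (TV 2)) (TMul (TV 2) (TV 0))))))) (TOpp (TQi (TMul (TSub (TMul (TV 1) (TV 2)) (TQ (TMul (TV 2) (TV 1)))) (TV 0))))) (TMul (TV 0) (TSub (TMul (TV 1) (TV 2)) (TQ (TMul (TV 2) (TV 1))))))).
Definition sf_lhs := (TSub (TMul (TV 1) (TSub (TMul (TV 0) (TV 1)) (TQi (TMul (TV 1) (TV 0)))))
   (TQi (TMul (TSub (TMul (TV 0) (TV 1)) (TQi (TMul (TV 1) (TV 0)))) (TV 1)))).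
Definition sf_rhs := TOpp (TQi (TAdd (TSub (TMul (TMul (TV 1) (TV 1)) (TV 0))
   (TAdd (TQ (TMul (TMul (TV 1) (TV 0)) (TV 1))) (TQi (TMul (TMul (TV 1) (TV 0)) (TV 1)))))
   (TMul (TV 0) (TMul (TV 1) (TV 1))))).

Lemma adj_ok : check (norm (TSub adj_lhs adj_rhs)). Proof. vm_compute. reflexivity. Qed.
Lemma na_ok : check (norm (TSub na_lhs na_rhs)). Proof. vm_compute. reflexivity. Qed.
Lemma sf_ok : check (norm (TSub sf_lhs sf_rhs)). Proof. vm_compute. reflexivity. Qed.

Section Alg.
Variables (R : rcfType) (A : unitAlgType R) (q : R).
Hypothesis q0 : q != 0.

Definition SF (x y : A) := y * qcomm q x y - q^-1 *: (qcomm q x y * y).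

Lemma serre_q (x y : A) :
  y ^+ 2 * x - (q + q^-1) *: (y * x * y) + x * y ^+ 2 = 0 -> SF x y = 0.
Proof.
move=> h; have := refl_eq q0 [:: x; y] sf_ok.
rewrite /SF /qcomm /= => ->.
by move: h; rewrite expr2 scalerDl => ->; rewrite scaler0 oppr0.
Qed.

Lemma adj_step (a b P : A) : 1 + q * q != 0 ->
  a * P - P * a = 0 -> SF a b = 0 -> SF b P = 0 -> SF a (qcomm q b P) = 0.
Proof.
rewrite /SF /qcomm => nz h0 h1 h2.
have := refl_eq q0 [:: a; b; P] adj_ok.
rewrite /= h0 h1 h2 !(mulr0, mul0r, scaler0, oppr0, addr0, subr0).
set g := (X in X + _ = 0).
rewrite scalerA -{1}[g]scale1r -scalerDl => /eqP.
by rewrite scaler_eq0 (negbTE nz) => /eqP.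
Qed.

Lemma nonadj_step (x y z : A) : x * z = z * x -> y * z = q *: (z * y) ->
  qcomm q x y * z = q *: (z * qcomm q x y).
Proof.
move=> /eqP; rewrite -subr_eq0 => /eqP h0 /eqP; rewrite -subr_eq0 => /eqP h1.
have := refl_eq q0 [:: x; y; z] na_ok.
rewrite /qcomm /= h0 h1 !(mulr0, mul0r, scaler0, oppr0, addr0, subr0).
done.
Qed.
End Alg.

Section Main.
Variables (R : rcfType) (A : unitAlgType R) (q : R) (l : nat)
  (star : A -> A) (K E : nat -> A) (Khat : A).
Hypotheses (qpos : 0 < q) (Hrel : Uq_su_relations q l star K E Khat).

Let q0 : q != 0. Proof. by rewrite gt_eqF. Qed.
Let s := Num.sqrt q.
Let s0 : s != 0. Proof. by rewrite /s sqrtr_eq0 -ltNge. Qed.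
Let ss : s * s = q. Proof. by rewrite -expr2 /s sqr_sqrtr // ltW. Qed.

Lemma Hstar : is_star star. Proof. by case: Hrel. Qed.
Lemma HKunit i : (1 <= i <= l)%N -> K i \is a GRing.unit.
Proof. by case: Hrel => _ [H _ _] _ _ /H []. Qed.
Lemma HKstar i : (1 <= i <= l)%N -> star (K i) = K i.
Proof. by case: Hrel => _ [H _ _] _ _ /H []. Qed.
Lemma HKcomm i j : (1 <= i <= l)%N -> (1 <= j <= l)%N -> K i * K j = K j * K i.
Proof. by case: Hrel => _ [_ H _] _ _; apply: H. Qed.
Lemma HKconj i j : (1 <= i <= l)%N -> (1 <= j <= l)%N ->
  K i * E j * (K i)^-1 = Kcoef q i j *: E j.
Proof. by case: Hrel => _ [_ _ H] _ _; apply: H. Qed.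
Lemma HSerre i j : (1 <= i <= l)%N -> (1 <= j <= l)%N ->
  ((i == j.+1) || (j == i.+1)) ->
  E i ^+ 2 * E j - (q + q^-1) *: (E i * E j * E i) + E j * E i ^+ 2 = 0.
Proof. by case: Hrel => _ _ [_ H _] _; apply: H. Qed.
Lemma HEcomm i j : (1 <= i <= l)%N -> (1 <= j <= l)%N ->
  (i != j) -> ~~ ((i == j.+1) || (j == i.+1)) -> E i * E j = E j * E i.
Proof. by case: Hrel => _ _ [_ _ H] _; apply: H. Qed.
Lemma HKhunit : Khat \is a GRing.unit. Proof. by case: Hrel => _ _ _ []. Qed.
Lemma HKhstar : star Khat = Khat. Proof. by case: Hrel => _ _ _ []. Qed.
Lemma HKhK i : (1 <= i <= l)%N -> Khat * K i = K i * Khat.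
Proof. by case: Hrel => _ _ _ [_ _ H _ _]; apply: H. Qed.
Lemma HKhE j : (1 <= j <= l)%N ->
  Khat * E j * Khat^-1 = (if j == l then q else 1) *: E j.
Proof. by case: Hrel => _ _ _ [_ _ _ _ H]; apply: H. Qed.

Definition cw (x y : A) (a : R) := x * y = a *: (y * x).

Lemma cw_mulL x y z a b c : cw x z a -> cw y z b -> c = a * b -> cw (x * y) z c.
Proof.
rewrite /cw => hx hy ->.
rewrite -mulrA hy -scalerAr [x * (z * y)]mulrA hx -scalerAl scalerA -mulrA.
by rewrite mulrC.
Qed.

Lemma cw_qcomm x y z a b c : cw x y a -> cw x z b -> c = a * b -> cw x (qcomm q y z) c.
Proof.
rewrite /cw /qcomm => hy hz ->.
have e1 : x * (y * z) = (a * b) *: (y * z * x).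
  by rewrite [LHS]mulrA hy -scalerAl -[y * x * z]mulrA hz -scalerAr scalerA [y * (z * x)]mulrA.
have e2 : x * (z * y) = (a * b) *: (z * y * x).
  by rewrite [LHS]mulrA hz -scalerAl -[z * x * y]mulrA hy -scalerAr scalerA [z * (y * x)]mulrA mulrC.
rewrite mulrBr -scalerAr e1 e2 mulrBl -scalerAl scalerBr !scalerA !mulrA.
by rewrite -[q^-1 * a * b]mulrA [q^-1 * (a * b)]mulrC.
Qed.

Lemma cw_inv x y a : x \is a GRing.unit -> a != 0 -> cw x y a -> cw x^-1 y a^-1.
Proof.
rewrite /cw => ux a0 h.
have e : y * x^-1 = a *: (x^-1 * y).
  have := congr1 (fun t => x^-1 * t * x^-1) h.
  by rewrite /= mulKr // -scalerAr -scalerAl [x^-1 * (y * x)]mulrA mulrK.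
by rewrite e scalerA mulVf // scale1r.
Qed.

Lemma star_opp a : star (- a) = - star a.
Proof.
case: Hstar => _ hs _ _ _.
by rewrite -scaleN1r hs scaleN1r.
Qed.

Lemma cw_star x y a : star x = x -> cw x y a -> star y * x = a *: (x * star y).
Proof.
case: Hstar => _ hs hm _ _ hx h.
by rewrite -{1}hx -hm h hs hm hx.
Qed.

Lemma Kc_far p m : ((p.+2 <= m) || (m.+2 <= p))%N -> Kcoef q p m = 1.
Proof.
move=> h; rewrite /Kcoef.
have -> : (p == m) = false by apply/eqP; lia.
have -> : (p == m.+1) = false by apply/eqP; lia.
have -> : (m == p.+1) = false by apply/eqP; lia.
by [].
Qed.
Lemma Kc_eq p : Kcoef q p p = q. Proof. by rewrite /Kcoef eqxx. Qed.
Lemma Kc_next p : Kcoef q p p.+1 = s^-1.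
Proof.
rewrite /Kcoef.
have -> : (p == p.+1) = false by apply/eqP; lia.
by rewrite eqxx orbT.
Qed.
Lemma Kc_prev p : Kcoef q p.+1 p = s^-1.
Proof.
rewrite /Kcoef.
have -> : (p.+1 == p) = false by apply/eqP; lia.
by rewrite eqxx.
Qed.

Lemma cwKE p m : (1 <= p <= l)%N -> (1 <= m <= l)%N -> cw (K p) (E m) (Kcoef q p m).
Proof.
move=> hp hm; rewrite /cw.
by rewrite -[K p * E m](mulrVK (HKunit hp)) HKconj // -scalerAl.
Qed.

Let sq1 : s^-1 * (q * s^-1) = 1.
Proof. by rewrite -ss; field. Qed.
Let sq2 : (q * s^-1) * (s^-1 * q) = q.
Proof. by rewrite -ss; field. Qed.

Lemma KM_far p n m : (1 <= p <= l)%N -> (1 <= m)%N -> (m + n <= l)%N -> (p.+2 <= m)%N ->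
  cw (K p) (Mup E q n m) 1.
Proof.
elim: n m => [|n IH] m hp hm hmn hpm /=.
  rewrite -(@Kc_far p m); last by rewrite hpm.
  by apply: cwKE => //; lia.
apply: (@cw_qcomm _ _ _ 1 1); last by rewrite mulr1.
  rewrite -(@Kc_far p m); last by rewrite hpm.
  by apply: cwKE => //; lia.
by apply: IH => //; lia.
Qed.

Lemma KM_prev p n m : (1 <= p <= l)%N -> (m + n <= l)%N -> p.+1 = m ->
  cw (K p) (Mup E q n m) s^-1.
Proof.
case: n => [|n] hp hmn hpm /=.
  by rewrite -hpm -(Kc_next p); apply: cwKE => //; lia.
apply: (@cw_qcomm _ _ _ s^-1 1); last by rewrite mulr1.
  by rewrite -hpm -(Kc_next p); apply: cwKE => //; lia.
by apply: KM_far => //; lia.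
Qed.

Lemma KM_first n m : (1 <= m)%N -> (m + n <= l)%N -> (0 < n)%N ->
  cw (K m) (Mup E q n m) (q * s^-1).
Proof.
case: n => [|n] // hm hmn _ /=.
apply: (@cw_qcomm _ _ _ q s^-1) => //.
  by rewrite -(Kc_eq m); apply: cwKE => //; lia.
by apply: KM_prev => //; lia.
Qed.

Lemma KM_in p n m : (1 <= m)%N -> (m + n <= l)%N -> (m < p < m + n)%N ->
  cw (K p) (Mup E q n m) 1.
Proof.
elim: n m => [|n IH] m hm hmn hp /=; first by lia.
have [e|ne] := eqVneq m.+1 p.
  apply: (@cw_qcomm _ _ _ s^-1 (q * s^-1)); last by rewrite sq1.
    by rewrite -e -(Kc_prev m); apply: cwKE => //; lia.
  by rewrite -e; apply: KM_first => //; lia.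
apply: (@cw_qcomm _ _ _ 1 1); last by rewrite mulr1.
  by rewrite -(@Kc_far p m); [apply: cwKE => //; lia | apply/orP; right; lia].
by apply: IH => //; lia.
Qed.

Lemma KM_last p n m : (1 <= m)%N -> (m + n <= l)%N -> (m < p)%N -> p = (m + n)%N ->
  cw (K p) (Mup E q n m) (s^-1 * q).
Proof.
elim: n m => [|n IH] m hm hmn hp hpe /=; first by lia.
have [e|ne] := eqVneq m.+1 p.
  have n0 : n = 0%N by lia.
  subst n; rewrite /=.
  apply: (@cw_qcomm _ _ _ s^-1 q) => //.
    by rewrite -e -(Kc_prev m); apply: cwKE => //; lia.
  by rewrite -e -(Kc_eq m.+1); apply: cwKE => //; lia.
apply: (@cw_qcomm _ _ _ 1 (s^-1 * q)); last by rewrite mul1r.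
  by rewrite -(@Kc_far p m); [apply: cwKE => //; lia | apply/orP; right; lia].
by apply: IH => //; lia.
Qed.

Definition Q p := \prod_(p <= m < l.+1) K m.

Lemma Q_step p : (p <= l)%N -> Q p = K p * Q p.+1.
Proof. by move=> h; rewrite /Q big_ltn. Qed.
Lemma Q_last : Q l = K l.
Proof. by rewrite /Q big_nat1. Qed.

Lemma QA k : forall p j, (1 <= j)%N -> (j < p)%N -> (p <= l)%N -> (l - p = k)%N ->
  cw (Q p) (Mup E q (l - j) j) (s^-1 * q).
Proof.
elim: k => [|k IH] p j hj hjp hpl hk.
  have e : p = l by lia.
  subst p; rewrite Q_last; apply: KM_last => //; lia.
rewrite Q_step //.
apply: (@cw_mulL _ _ _ 1 (s^-1 * q)); last by rewrite mul1r.
  by apply: KM_in => //; lia.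
by apply: IH => //; lia.
Qed.

Lemma QB j : (1 <= j <= l)%N -> cw (Q j) (Mup E q (l - j) j) q.
Proof.
move=> hj.
have [e|ne] := eqVneq j l.
  subst j; rewrite Q_last subnn /= -(Kc_eq l); apply: cwKE => //.
rewrite Q_step; last by lia.
apply: (@cw_mulL _ _ _ (q * s^-1) (s^-1 * q)); last by rewrite sq2.
  by apply: KM_first => //; lia.
by apply: (@QA (l - j.+1)) => //; lia.
Qed.

Lemma QC k : forall i j, (1 <= i)%N -> (i < j)%N -> (j <= l)%N -> (j - i.+1 = k)%N ->
  cw (Q i) (Mup E q (l - j) j) (s^-1 * q).
Proof.
elim: k => [|k IH] i j hi hij hjl hk.
  have e : j = i.+1 by lia.
  subst j; rewrite Q_step; last by lia.
  apply: (@cw_mulL _ _ _ s^-1 q) => //.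
    by apply: KM_prev => //; lia.
  by apply: QB; lia.
rewrite Q_step; last by lia.
apply: (@cw_mulL _ _ _ 1 (s^-1 * q)); last by rewrite mul1r.
  by apply: KM_far => //; lia.
by apply: IH => //; lia.
Qed.

Lemma cwKhE m : (1 <= m <= l)%N -> cw Khat (E m) (if m == l then q else 1).
Proof.
move=> hm; rewrite /cw.
by rewrite -[Khat * E m](mulrVK HKhunit) HKhE // -scalerAl.
Qed.

Lemma KhM n : forall m, (1 <= m)%N -> (m + n = l)%N -> cw Khat (Mup E q n m) q.
Proof.
elim: n => [|n IH] m hm hmn /=.
  have e : m = l by lia.
  by subst m; have := cwKhE (m := l); rewrite eqxx; apply; lia.
apply: (@cw_qcomm _ _ _ 1 q); last by rewrite mul1r.
  have := cwKhE (m := m).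
  have -> : (m == l) = false by apply/eqP; lia.
  by apply; lia.
by apply: IH; lia.
Qed.

Lemma KhiM j : (1 <= j <= l)%N -> cw Khat^-1 (Mup E q (l - j) j) q^-1.
Proof.
move=> hj; apply: cw_inv => //; first exact: HKhunit.
by apply: KhM; lia.
Qed.

Lemma NP i j : (1 <= i)%N -> (i < j)%N -> (j <= l)%N ->
  cw (Defs.Nil K Khat i l) (Mup E q (l - j) j) ((s^-1 * q) * q^-1).
Proof.
move=> hi hij hjl; apply: (@cw_mulL _ _ _ (s^-1 * q) q^-1) => //.
  by apply: (@QC (j - i.+1)) => //.
by apply: KhiM; lia.
Qed.

Lemma NP' i j : (1 <= i)%N -> (i < j)%N -> (j <= l)%N ->
  cw (Defs.Nil K Khat j l) (Mup E q (l - i) i) ((s^-1 * q) * q^-1).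
Proof.
move=> hi hij hjl; apply: (@cw_mulL _ _ _ (s^-1 * q) q^-1) => //.
  by apply: (@QA (l - j)) => //.
by apply: KhiM; lia.
Qed.

Lemma Q_comm_K p m : (1 <= p)%N -> (1 <= m <= l)%N -> K m * Q p = Q p * K m.
Proof.
move=> hp hm; rewrite /Q big_nat_cond.
apply: commr_prod => i /andP[/andP[h1 h2] _].
by apply: HKcomm => //; lia.
Qed.

Lemma Q_comm p p' : (1 <= p)%N -> (1 <= p')%N -> Q p * Q p' = Q p' * Q p.
Proof.
move=> hp hp'; rewrite {2 3}/Q big_nat_cond.
apply: commr_prod => i /andP[/andP[h1 h2] _].
by rewrite /GRing.comm Q_comm_K //; lia.
Qed.

Lemma Kh_Q p : (1 <= p)%N -> Khat * Q p = Q p * Khat.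
Proof.
move=> hp; rewrite /Q big_nat_cond.
apply: commr_prod => i /andP[/andP[h1 h2] _].
by apply: HKhK; lia.
Qed.

Lemma Khi_Q p : (1 <= p)%N -> Khat^-1 * Q p = Q p * Khat^-1.
Proof.
move=> hp; apply/esym/commrV; rewrite /GRing.comm -Kh_Q //.
Qed.

Lemma Qstar k : forall p, (1 <= p)%N -> (l.+1 - p = k)%N -> star (Q p) = Q p.
Proof.
case: Hstar => _ _ hm h1 _.
elim: k => [|k IH] p hp hk.
  by rewrite /Q big_geq ?h1 //; lia.
rewrite Q_step; last by lia.
rewrite hm IH; last by lia. 2: by lia.
by rewrite HKstar ?Q_comm_K //; lia.
Qed.

Lemma Khistar : star Khat^-1 = Khat^-1.
Proof.
case: Hstar => _ _ hm h1 _.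
have := congr1 star (mulVr HKhunit).
rewrite hm h1 HKhstar => e.
by rewrite -[LHS](mulKr HKhunit) e mulr1.
Qed.

Lemma Nstar i : (1 <= i)%N -> star (Defs.Nil K Khat i l) = Defs.Nil K Khat i l.
Proof.
case: Hstar => _ _ hm _ _ hi.
rewrite /Defs.Nil hm Khistar -/(Q i) (Qstar (k := l.+1 - i)) //.
by rewrite Khi_Q.
Qed.

Lemma N_comm i j : (1 <= i)%N -> (1 <= j)%N ->
  Defs.Nil K Khat i l * Defs.Nil K Khat j l = Defs.Nil K Khat j l * Defs.Nil K Khat i l.
Proof.
move=> hi hj; rewrite /Defs.Nil -/(Q i) -/(Q j).
rewrite !mulrA -[Q j * Khat^-1 * Q i]mulrA Khi_Q // mulrA Q_comm //.
by rewrite -[Q i * Khat^-1 * Q j]mulrA Khi_Q // mulrA.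
Qed.

Lemma Pstep i : (i < l)%N ->
  Mup E q (l - i) i = qcomm q (E i) (Mup E q (l - i.+1) i.+1).
Proof. by move=> h; rewrite -(subnSK h). Qed.

Lemma commEM k n : forall m, (1 <= k)%N -> (k.+2 <= m)%N -> (m + n <= l)%N ->
  E k * Mup E q n m = Mup E q n m * E k.
Proof.
elim: n => [|n IH] m hk hkm hmn /=.
  apply: HEcomm; [lia|lia|apply/eqP; lia|].
  by rewrite negb_or; apply/andP; split; apply/eqP; lia.
have h1 : E k * E m = E m * E k.
  apply: HEcomm; [lia|lia|apply/eqP; lia|].
  by rewrite negb_or; apply/andP; split; apply/eqP; lia.
have h2 := IH m.+1 hk ltac:(lia) ltac:(lia).
have hz : forall (c : R) (y : A), GRing.comm (E k) y -> GRing.comm (E k) (c *: y).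
  by move=> c y h; rewrite /GRing.comm -scalerAr -scalerAl h.
by rewrite /qcomm; apply: commrB; [apply: commrM | apply: hz; apply: commrM].
Qed.

Lemma qq_nz : 1 + q * q != 0.
Proof. by rewrite gt_eqF //; nra. Qed.

Lemma adjS n : forall k, (1 <= k)%N -> (k.+1 + n = l)%N -> SF q (E k) (Mup E q n k.+1) = 0.
Proof.
elim: n => [|n IH] k hk hkn /=.
  by apply: serre_q => //; apply: HSerre; try lia; rewrite eqxx.
apply: adj_step => //.
- exact: qq_nz.
- by rewrite commEM ?subrr //; lia.
- by apply: serre_q => //; apply: HSerre; try lia; rewrite eqxx.
- by apply: IH; lia.
Qed.

Lemma PPadj k : (1 <= k)%N -> (k < l)%N ->
  Mup E q (l - k) k * Mup E q (l - k.+1) k.+1 =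
  q *: (Mup E q (l - k.+1) k.+1 * Mup E q (l - k) k).
Proof.
move=> hk hkl; rewrite Pstep //.
have := @adjS (l - k.+1) k hk ltac:(lia).
rewrite /SF => /eqP; rewrite subr_eq0 => /eqP ->.
by rewrite scalerA mulfV // scale1r.
Qed.

Lemma PPnon d : forall i j, (1 <= i)%N -> (j <= l)%N -> j = (i.+1 + d)%N ->
  Mup E q (l - i) i * Mup E q (l - j) j = q *: (Mup E q (l - j) j * Mup E q (l - i) i).
Proof.
elim: d => [|d IH] i j hi hj hd.
  by rewrite addn0 in hd; subst j; apply: PPadj => //; lia.
rewrite Pstep; last by lia.
apply: nonadj_step => //.
  by rewrite commEM //; lia.
by apply: IH; lia.
Qed.

Lemma main i j : (1 <= i)%N -> (i < j)%N -> (j <= l)%N ->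
  Xi star K E Khat q l i * Xi star K E Khat q l j =
  q^-1 *: (Xi star K E Khat q l j * Xi star K E Khat q l i).
Proof.
move=> hi hij hjl.
case: Hstar => _ hs hm _ _.
rewrite /Xi /Mjk.
set Ni := Defs.Nil K Khat i l; set Nj := Defs.Nil K Khat j l.
set Yi := star (Mup E q (l - i) i); set Yj := star (Mup E q (l - j) j).
set k := (s^-1 * q) * q^-1.
have a : Yj * Ni = k *: (Ni * Yj) by apply: cw_star; [exact: Nstar | exact: NP].
have b : Yi * Nj = k *: (Nj * Yi) by apply: cw_star; [apply: Nstar; lia | exact: NP'].
have c : Ni * Nj = Nj * Ni by apply: N_comm; lia.
have d : Yj * Yi = q *: (Yi * Yj).
  by rewrite /Yi /Yj -hm (@PPnon (j - i.+1)) ?hs ?hm //; lia.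
have L : Ni * Yi * (Nj * Yj) = k *: (Ni * Nj * (Yi * Yj)).
  by rewrite -mulrA [Yi * (Nj * Yj)]mulrA b -scalerAl -scalerAr !mulrA.
have Rr : Nj * Yj * (Ni * Yi) = (k * q) *: (Ni * Nj * (Yi * Yj)).
  rewrite -mulrA [Yj * (Ni * Yi)]mulrA a -scalerAl -scalerAr.
  rewrite -[Ni * Yj * Yi]mulrA d -scalerAr -scalerAr scalerA mulrA -c.
  by rewrite mulrC.
by rewrite L Rr scalerA mulrCA mulVf // mulr1.
Qed.
End Main.

Theorem lemma3p14 (R : rcfType) (A : unitAlgType R) (q : R) (l : nat)
    (star : A -> A) (K E : nat -> A) (Khat : A) :
  0 < q -> q < 1 -> (1 <= l)%N ->
  Uq_su_relations q l star K E Khat ->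
  forall i j : nat, (1 <= i)%N -> (i < j)%N -> (j <= l)%N ->
    Xi star K E Khat q l i * Xi star K E Khat q l j =
      q^-1 *: (Xi star K E Khat q l j * Xi star K E Khat q l i).
Proof.
move=> q0 _ _ H i j hi hij hjl.
exact: (main q0 H hi hij hjl).
Qed.
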